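(* Let $X$ be an infinite regular space. Then there exists a sequence $(G_n)_{n=1}^\infty$ of pairwise disjoint infinite open subsets of $X$.
   Context: Regular spaces are assumed to be $T_1$ (points are closed). *)

(* Defs.v *)
From HB Require Import structures.
From mathcomp Require Import all_boot all_order all_algebra.
From mathcomp Require Import all_classical all_reals all_analysis.

(* Main.v *)
Require Import Defs.
From HB Require Import structures.
From mathcomp Require Import all_boot all_order all_algebra.
From mathcomp Require Import all_classical all_reals all_analysis.
Local Open Scope classical_set_scope.


Lemma clsub (X : topologicalType) (A C : set X) : closed C -> A `<=` C -> closure A `<=` C.
Proof. by move=> cC AC; rewrite [X in _ `<=` X](closure_id C).1 //; exact: closureS. Qed.

Lemma sep2 (X : topologicalType) (hacc : accessible_space X) (reg : regular_space X) (x y : X) : x != y -> exists U U' : set X,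
  [/\ open U, open U', U x, U' y & closure U `&` closure U' = set0].
Proof.
move=> /hacc [Op [oOp /set_mem Opx /set_mem yOp]].
have [U [V [oU oV Ux OpV UV]]] := (regular_openP x).1 (reg x) (~` Op)
  (open_closedC oOp) (fun h => h Opx).
have clU : closure U `<=` ~` V.
  apply: clsub; first exact: open_closedC.
  by move=> z Uz Vz; have : (U `&` V) z by []; rewrite UV.
have [U' [V' [oU' oV' U'y UV' U'V']]] := (regular_openP y).1 (reg y) (closure U)
  (@closed_closure _ U) (fun h => clU y h (OpV y yOp)).
have clU' : closure U' `<=` ~` V'.
  apply: clsub; first exact: open_closedC.
  by move=> z Uz Vz; have : (U' `&` V') z by []; rewrite U'V'.
exists U, U'; split => //; apply/seteqP; split => // z [/UV' h /clU' h'].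
by case: h'.
Qed.

Definition stepP {X : topologicalType} (W : set X) (p : set X * set X) :=
  [/\ open p.1, open p.2, p.1 !=set0, p.1 `<=` W & p.2 `<=` W] /\
  (p.1 `&` p.2 = set0 /\ infinite_set p.2).

Lemma step (X : topologicalType) (hacc : accessible_space X) (reg : regular_space X) (W : set X) : open W -> infinite_set W -> exists p, stepP W p.
Proof.
move=> oW iW; have [x Wx] := infinite_setN0 iW.
have [y [Wy ynx]] : exists y, W y /\ y <> x.
  by have [y [Wy /= ynx]] := infinite_setN0 (infinite_setD iW (finite_set1 x)); exists y.
have xy : x != y by apply/eqP => h; apply: ynx; rewrite h.
have [U [U' [oU oU' Ux U'y cl0]]] := @sep2 X hacc reg x y xy.
have pair_ok : forall V : set X, open V -> V `<=` closure V ->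
  forall z, V z -> W z -> infinite_set (W `&` ~` closure V) ->
  stepP W (V `&` W, W `&` ~` closure V).
  move=> V oV Vcl z Vz Wz inf; split; split => //=.
  - exact: openI.
  - by apply: openI => //; apply: closed_openC; exact: closed_closure.
  - by exists z.
  - by apply/seteqP; split => // t [[/Vcl Vt _] [_ /(_ Vt)]].
case: (pselect (finite_set (W `&` ~` closure U))) => fin.
- exists (U' `&` W, W `&` ~` closure U'); apply: (pair_ok _ oU' _ y) => //.
    exact: subset_closure.
  move=> fin'; apply: iW.
  apply: (@sub_finite_set _ _ ((W `&` ~` closure U) `|` (W `&` ~` closure U'))).
    move=> z Wz; case: (pselect (closure U z)) => cu; last by left.
    right; split => // cu'.
    by have : (closure U `&` closure U') z by []; rewrite cl0.
  by rewrite finite_setU.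
- exists (U `&` W, W `&` ~` closure U); apply: (pair_ok _ oU _ x) => //.
  exact: subset_closure.
Qed.

Lemma main_seq (X : topologicalType) (hacc : accessible_space X) (reg : regular_space X) : infinite_set [set: X] -> exists V : nat -> set X,
  [/\ forall n, open (V n), forall n, V n !=set0 &
      forall n m, n <> m -> V n `&` V m = set0].
Proof.
move=> iT.
have [f hf] := @choice (set X) (set X * set X)
  (fun W p => open W /\ infinite_set W -> stepP W p) (fun W =>
  match pselect (open W /\ infinite_set W) with
  | left h => let: ex_intro p hp := @step X hacc reg W h.1 h.2 in ex_intro _ p (fun _ => hp)
  | right h => ex_intro _ (set0, set0) (fun h' => False_ind _ (h h'))
  end).
pose Wn n := iter n (fun W => (f W).2) setT.
have hW : forall n, open (Wn n) /\ infinite_set (Wn n).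
  elim => [|n [oW iW]]; first by split => //; exact: openT.
  by have [[_ o2 _ _ _] [_ i2]] := hf _ (conj oW iW); split.
have mono : forall n k, Wn (k + n) `<=` Wn n.
  move=> n; elim => [|k IH] //=.
  have [[_ _ _ _ s2] _] := hf _ (hW (k + n)); exact: subset_trans s2 IH.
exists (fun n => (f (Wn n)).1); split.
- by move=> n; have [[ho1 _ _ _ _] _] := hf _ (hW n).
- by move=> n; have [[_ _ hn1 _ _] _] := hf _ (hW n).
suff H : forall n m, (n < m)%N -> (f (Wn n)).1 `&` (f (Wn m)).1 = set0.
  move=> n m nm; case: (ltngtP n m) => h; first exact: H.
    by rewrite setIC; apply: H.
  by move/eqP: h => /eqP h; contradiction.
move=> n m ltnm; apply/seteqP; split => // z [Vn Vm].
have [[_ _ _ s1 _] _] := hf _ (hW m).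
have Vm' : (f (Wn n)).2 z.
  apply: (mono n.+1 (m - n.+1)); rewrite subnK //; exact: s1.
have [_ [d _]] := hf _ (hW n).
by have : ((f (Wn n)).1 `&` (f (Wn n)).2) z by []; rewrite d.
Qed.

From Stdlib Require Cantor.

Theorem lemma5p2 (X : topologicalType) :
  accessible_space X -> regular_space X -> infinite_set [set: X] ->
  exists G : nat -> set X,
    [/\ forall n, open (G n),
        forall n, infinite_set (G n) &
        forall n m, n <> m -> G n `&` G m = set0].
Proof.
move=> hacc reg iT.
have [V [oV nV dV]] := @main_seq X hacc reg iT.
have tinj : forall a b, Cantor.to_nat a = Cantor.to_nat b -> a = b.
  by move=> a b h; rewrite -(Cantor.cancel_of_to a) h Cantor.cancel_of_to.
have [pt hpt] := @choice nat X (fun k x => V k x) nV.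
exists (fun n => \bigcup_(j in [set: nat]) V (Cantor.to_nat (n, j))); split.
- by move=> n; apply: bigcup_open => j _; exact: oV.
- move=> n fin.
  pose g j := pt (Cantor.to_nat (n, j)).
  have ginj : {in [set: nat] &, injective g}.
    move=> i j _ _ gij.
    case: (pselect (Cantor.to_nat (n, i) = Cantor.to_nat (n, j))) => e.
      by case: (tinj _ _ e).
    have d := dV _ _ e.
    have : (V (Cantor.to_nat (n, i)) `&` V (Cantor.to_nat (n, j))) (g i).
      by split; [exact: hpt | rewrite gij; exact: hpt].
    by rewrite d.
  apply: infinite_nat; rewrite -(eq_finite_set (inj_card_eq ginj)).
  apply: sub_finite_set fin => _ [j _ <-]; exists j => //; exact: hpt.
- move=> n m nm; apply/seteqP; split => // z [[i _ Vi] [j _ Vj]].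
  have e : Cantor.to_nat (n, i) <> Cantor.to_nat (m, j).
    by move=> /tinj [].
  by have : (V (Cantor.to_nat (n, i)) `&` V (Cantor.to_nat (m, j))) z by []; rewrite dV.
Qed.
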